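(* Let $k\ge2$ and let $(L,b,f)$ be an even $\Phi_{2^k}$-lattice such that the isometry $D_f$ of $D_L$ has order at most $2^{k-2}$. Then $\delta_L=0$.
   Context: A $\Phi_{n}$-lattice is a $\mathbb{Z}$-lattice $(L,b)$ with an isometry $f$ with $\Phi_n(f)=0$ ($\Phi_n$ the $n$-th cyclotomic polynomial). $D_L=L^\vee/L$ and $D_f$ is the induced isometry. Under these hypotheses $L$ is $2$-elementary, and for a $2$-elementary integral lattice, $\delta_L=0$ if $n(L^\vee)\subseteq\mathbb{Z}$ (i.e. $b(x,x)\in\mathbb{Z}$ for all $x\in L^\vee$) and $\delta_L=1$ otherwise. *)

(* Defs.v *)
From Stdlib Require Import ClassicalEpsilon.
From mathcomp Require Import all_boot all_order all_algebra all_field.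
Set Implicit Arguments. Unset Strict Implicit. Unset Printing Implicit Defensive.
Import Order.TTheory GRing.Theory Num.Theory.
Local Open Scope ring_scope.

(* A Z-lattice of rank r is modelled as Z^r (column vectors) with the
   bilinear form b(x,y) = x^T G y given by an integer Gram matrix G.
   The form extends to Q^r = L (x) Q via the same matrix over rat. *)

Definition ratmx (m n : nat) (A : 'M[int]_(m, n)) : 'M[rat]_(m, n) :=
  map_mx (fun z : int => z%:~R) A.

Definition intvec (m n : nat) (A : 'M[rat]_(m, n)) : Prop :=
  forall i j, A i j \is a Num.int.

Definition is_lattice (r : nat) (G : 'M[int]_r) : Prop :=
  G^T = G /\ \det G != 0.

Definition even_lattice (r : nat) (G : 'M[int]_r) : Prop :=
  forall x : 'cV[int]_r, (2%:Z %| (x^T *m G *m x) ord0 ord0)%Z.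

Definition is_isometry (r : nat) (G F : 'M[int]_r) : Prop :=
  F^T *m G *m F = G.

Definition mxpeval (r : nat) (p : {poly int}) (F : 'M[int]_r) : 'M[int]_r :=
  \sum_(i < size p) p`_i *: F ^+ i.

Definition in_dual (r : nat) (G : 'M[int]_r) (x : 'cV[rat]_r) : Prop :=
  forall y : 'cV[int]_r, intvec (x^T *m ratmx G *m ratmx y).

(* D_f^m = id on D_L = L^v / L *)
Definition Df_pow_id (r : nat) (G F : 'M[int]_r) (m : nat) : Prop :=
  forall x : 'cV[rat]_r, in_dual G x -> intvec ((ratmx F) ^+ m *m x - x).

Definition Df_order_le (r : nat) (G F : 'M[int]_r) (N : nat) : Prop :=
  exists m : nat, [/\ (0 < m)%N, (m <= N)%N & Df_pow_id G F m].

Definition delta (r : nat) (G : 'M[int]_r) : nat :=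
  if excluded_middle_informative
       (forall x : 'cV[rat]_r, in_dual G x -> intvec (x^T *m ratmx G *m x))
  then 0%N else 1%N.

(* Main.v *)
Require Import Defs.
From Stdlib Require Import ClassicalEpsilon.
From mathcomp Require Import all_boot all_order all_algebra all_field.
Import GRing.Theory Num.Theory.
Local Open Scope ring_scope.

Lemma ratmxM r s t (A : 'M[int]_(r,s)) (B : 'M[int]_(s,t)) : ratmx (A *m B) = ratmx A *m ratmx B.
Proof. by rewrite /ratmx map_mxM. Qed.
Lemma ratmxT r s (A : 'M[int]_(r,s)) : ratmx A^T = (ratmx A)^T.
Proof. by rewrite /ratmx map_trmx. Qed.
Lemma ratmx1 r : ratmx (1 : 'M[int]_r) = 1.
Proof. by rewrite /ratmx map_mx1. Qed.
Lemma ratmxN r s (A : 'M[int]_(r,s)) : ratmx (- A) = - ratmx A.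
Proof. by rewrite /ratmx map_mxN. Qed.
Lemma ratmxX r (A : 'M[int]_r) a : ratmx (A ^+ a) = ratmx A ^+ a.
Proof. elim: a => [|a IH]; first by rewrite !expr0 ratmx1.
by rewrite !exprS -!mulmxE ratmxM IH. Qed.
Lemma divisors_2pow (j : nat) :
  perm_eq (rem (2 ^ j.+1)%N (divisors (2 ^ j.+1))) (divisors (2 ^ j)).
Proof.
apply: uniq_perm; first by rewrite rem_uniq // divisors_uniq.
  exact: divisors_uniq.
move=> d; rewrite mem_rem_uniq ?divisors_uniq // inE /=.
rewrite -!dvdn_divisors ?expn_gt0 //.
apply/andP/idP.
  case=> ne /(dvdn_pfactor _ _ (pdiv_prime (isT : (1 < 2)%N))) [i hi Ed]; subst d.
  rewrite dvdn_exp2l //.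
  rewrite -ltnS ltn_neqAle hi andbT. apply: contra ne => /eqP->; done.
move=> hd; split; last by rewrite expnS dvdn_mull.
apply/eqP => E; have := dvdn_leq (expn_gt0 2 j) hd; by rewrite E leq_exp2l // ltnn.
Qed.

Lemma Phi_2pow (j : nat) : 'Phi_(2 ^ j.+1) = 'X^(2 ^ j) + 1.
Proof.
have h1 := prod_Cyclotomic (expn_gt0 2 j.+1).
have h0 := prod_Cyclotomic (expn_gt0 2 j).
rewrite (big_rem (2 ^ j.+1)%N) ?divisors_id ?expn_gt0 //= in h1.
rewrite (perm_big _ (divisors_2pow j)) /= h0 in h1.
have nz : ('X^(2 ^ j) - 1 : {poly int}) != 0.
  by rewrite -size_poly_eq0 size_Xn_sub_1 ?expn_gt0.
apply: (mulIf nz); by rewrite h1 mulrC -subr_sqr -exprM -expnSr expr1n.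

Qed.
Lemma mxpeval_Xn1 r (F : 'M[int]_r) m : (0 < m)%N ->
  mxpeval ('X^m + 1) F = F ^+ m + 1.
Proof.
case: m => // m _; rewrite /mxpeval size_XnaddC // big_ord_recr /= big_ord_recl /=.
rewrite big1; last first.
  move=> i _; rewrite coefD coefXn coefC /= /bump /=.
  by rewrite add1n eqSS (ltn_eqF (ltn_ord i)) /= addr0 scale0r.
rewrite coefD coefXn coefC /= coefD coefXn coefC /=.
by rewrite add0r addr0 eqxx addr0 !scale1r expr0 addrC.
Qed.

Lemma gcd_closure (P : nat -> Prop) : P 0%N ->
  (forall a b, P a -> P b -> P (a + b)%N) ->
  (forall a b, (b <= a)%N -> P a -> P b -> P (a - b)%N) ->
  forall a b, P a -> P b -> P (gcdn a b).
Proof.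
move=> P0 PD PB.
have PM c a : P a -> P (c * a)%N.
  by move=> Pa; elim: c => [|c IH]; rewrite ?mul0n // mulSn; apply: PD.
elim/ltn_ind => a IH b Pa Pb; rewrite gcdnE.
case: eqP => [//|/eqP a0].
apply: IH => //; first by rewrite ltn_mod lt0n.
have E : (b %% a = b - b %/ a * a)%N by rewrite {2}(divn_eq b a) addKn.
by rewrite E; apply: PB => //; [exact: leq_divM | exact: PM].
Qed.

Lemma intvecD m n (A B : 'M[rat]_(m, n)) : intvec A -> intvec B -> intvec (A + B).
Proof. by move=> hA hB i j; rewrite mxE rpredD. Qed.
Lemma intvecN m n (A : 'M[rat]_(m, n)) : intvec A -> intvec (- A).
Proof. by move=> hA i j; rewrite mxE rpredN. Qed.
Lemma intvecM m n p (A : 'M[rat]_(m, n)) (B : 'M[rat]_(n, p)) :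
  intvec A -> intvec B -> intvec (A *m B).
Proof. by move=> hA hB i j; rewrite mxE rpred_sum // => l _; rewrite rpredM. Qed.
Lemma intvec_ratmx m n (A : 'M[int]_(m, n)) : intvec (ratmx A).
Proof. by move=> i j; rewrite mxE intr_int. Qed.

Lemma iso_pow r (A B : 'M[rat]_r) d : A^T *m B *m A = B -> (A ^+ d)^T *m B *m A ^+ d = B.
Proof.
move=> h; elim: d => [|d IH]; first by rewrite expr0 trmx1 mul1mx mulmx1.
rewrite exprS -mulmxE trmx_mul mulmxA -[_ *m A^T *m B]mulmxA.
by rewrite -[_ *m (A^T *m B) *m A]mulmxA h IH.
Qed.

Lemma tr1 (M : 'M[rat]_1) : M^T = M.
Proof. by apply/matrixP => i j; rewrite mxE !ord1. Qed.

Theorem corollary3p11 (k : nat) (hk : (2 <= k)%N) (r : nat) (G F : 'M[int]_r) :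
  is_lattice G -> even_lattice G -> is_isometry G F ->
  mxpeval ('Phi_(2 ^ k)) F = 0 ->
  Df_order_le G F (2 ^ (k - 2)) ->
  delta G = 0%N.
Proof.
case: k hk => [|[|k]] // _ [Gsym _] Gev Fiso hPhi [m [m0 mle Pm]].
rewrite (_ : (k.+2 - 2 = k)%N) in mle; last by rewrite subn2.
rewrite Phi_2pow mxpeval_Xn1 ?expn_gt0 // in hPhi.
have hF : F ^+ (2 ^ k.+1) = -1 by apply/eqP; rewrite -addr_eq0 hPhi.
set Fq := ratmx F; set Gq := ratmx G.
have hFq : Fq ^+ (2 ^ k.+1) = -1 by rewrite /Fq -ratmxX hF ratmxN ratmx1.
have intFq d : intvec (Fq ^+ d) by rewrite /Fq -ratmxX; apply: intvec_ratmx.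
pose P d := forall x, in_dual G x -> intvec (Fq ^+ d *m x - x).
have P0 : P 0%N by move=> x _ i j; rewrite expr0 mul1mx subrr mxE rpred0.
have PD a b : P a -> P b -> P (a + b)%N.
  move=> Pa Pb x hx.
  have -> : Fq ^+ (a + b) *m x - x = Fq ^+ a *m (Fq ^+ b *m x - x) + (Fq ^+ a *m x - x).
    by rewrite exprD -mulmxE mulmxBr mulmxA addrA subrK.
  by apply: intvecD; [apply: intvecM; [apply: intFq | apply: Pb] | apply: Pa].
have PB a b : (b <= a)%N -> P a -> P b -> P (a - b)%N.
  move=> ba Pa Pb x hx.
  have -> : Fq ^+ (a - b) *m x - x = Fq ^+ (a - b) *m (- (Fq ^+ b *m x - x)) + (Fq ^+ a *m x - x).
    have e : Fq ^+ (a - b) *m Fq ^+ b = Fq ^+ a by rewrite mulmxE -exprD subnK.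
    rewrite opprB mulmxBr mulmxA e.
    by rewrite addrA subrK.
  apply: intvecD; last exact: Pa.
  by apply: intvecM; [apply: intFq | apply: intvecN; apply: Pb].
have PK : P (2 ^ k.+2)%N.
  move=> x _; rewrite expnS mulnC exprM hFq sqrrN expr1n mul1mx subrr => i j.
  by rewrite mxE rpred0.
have PN : P (2 ^ k)%N.
  have := @gcd_closure P P0 PD PB m _ Pm PK.
  have : (gcdn m (2 ^ k.+2) %| 2 ^ k.+2)%N by apply: dvdn_gcdr.
  case/(dvdn_pfactor _ _ (pdiv_prime (isT : (1 < 2)%N))) => j _ Ej.
  have jk : (j <= k)%N.
    have := leq_trans (dvdn_leq m0 (dvdn_gcdl m (2 ^ k.+2))) mle.
    by rewrite Ej leq_exp2l.
  rewrite Ej => Pj.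
  have := dvdn_exp2l 2 jk; case/dvdnP => c ->.
  by elim: c => [|c IH]; rewrite ?mul0n // mulSn; apply: PD.
rewrite /delta; case: excluded_middle_informative => // H; exfalso; apply: H.
move=> x hx i j; rewrite !ord1.
set g := Fq ^+ (2 ^ k).
have gg : g *m g = -1 by rewrite mulmxE -exprD addnn -mul2n -expnS hFq.
have giso : g^T *m Gq *m g = Gq by apply: iso_pow; rewrite /Fq /Gq -!ratmxT -!ratmxM Fiso.
have GqT : Gq^T = Gq by rewrite /Gq -ratmxT Gsym.
pose bf (u v : 'cV[rat]_r) := u^T *m Gq *m v.
have bfsym u v : bf u v = bf v u.
  by rewrite /bf -[LHS]tr1 !trmx_mul trmxK GqT mulmxA.
have bfiso u v : bf (g *m u) (g *m v) = bf u v.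
  rewrite /bf trmx_mul !mulmxA.
  have -> : u^T *m g^T *m Gq *m g *m v = u^T *m (g^T *m Gq *m g) *m v by rewrite !mulmxA.
  by rewrite giso.
have t0 : bf (g *m x) x = 0.
  have : bf (g *m x) x = - bf (g *m x) x.
    rewrite -{1}bfiso mulmxA gg mulNmx mul1mx /bf linearN /= !mulNmx.
    by rewrite -/(bf x (g *m x)) bfsym.
  move/eqP; rewrite -addr_eq0 -mulr2n => /eqP h.
  move: h; move: (bf (g *m x) x) => M h.
  apply/matrixP => a b; move/matrixP: h => /(_ a b); rewrite !mxE.
  by move/eqP; rewrite -mulr2n mulrn_eq0 /= => /eqP.
set y := g *m x - x.
have hy : bf y y = bf x x *+ 2.
  have bfBl u v w : bf (u - v) w = bf u w - bf v w by rewrite /bf linearB /= !mulmxBl.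
  have bfBr u v w : bf u (v - w) = bf u v - bf u w by rewrite /bf mulmxBr.
  rewrite /y bfBl !bfBr bfiso (bfsym x (g *m x)) t0.
  by rewrite subr0 sub0r opprK mulr2n.
have yint : intvec y by apply: PN.
clearbody y.
pose yi := \matrix_(a, b) Num.floor (y a b).
have yiE : ratmx yi = y.
  by apply/matrixP => a b; rewrite !mxE floorK //; apply: yint.
have [z Ez] := dvdzP (Gev yi).
have : (bf y y) ord0 ord0 = (z * 2)%:~R.
  by rewrite /bf -yiE -ratmxT -!ratmxM mxE Ez.
rewrite hy mxE => h.
have e : (bf x x) ord0 ord0 = z%:~R.
  apply: (@mulIf _ 2%:R); first by rewrite pnatr_eq0.
  by rewrite mulr_natr mulr2n h intrM.
by rewrite /bf in e; rewrite e intr_int.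
Qed.
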